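(* Let $\mathbf C$ be a topological category, $G$ a topologised group and $U\to G$ an open normal subgroup. Then $\mathfrak z(G/U)\cong\mathfrak zG/\mathfrak zU$ as groups (via the map induced by $\mathfrak z$ of the projection).
   Context: A concrete category is a category $\mathbf C$ with a faithful functor $\mathfrak z:\mathbf C\to\mathbf{Set}$; it admits discrete objects if it has finite limits and $\mathfrak z$ has a fully faithful left adjoint $\mathbf F$. An object $X$ is discrete if $\mathfrak z:\mathrm{Hom}(X,Y)\to\mathrm{Hom}_{\mathbf{Set}}(\mathfrak zX,\mathfrak zY)$ is bijective for all $Y$. $\mathbf C$ is topological if $\mathbf F$ commutes with finite limits and for every discrete $D$ and all $X,Y$ the natural map $\mathrm{Hom}(D\times X,Y)\to\mathrm{Hom}_{\mathbf{Set}}(\mathfrak zD,\mathrm{Hom}(X,Y))$ is bijective. A topologised group is a group object in $\mathbf C$. A morphism $N\to G$ of topologised groups is normal if its cokernel $G\to G/N$ exists in the category of topologised groups and has kernel exactly $N\to G$; it is an open normal subgroup if moreover $G/N$ is discrete. *)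

(* Defs.v *)
Set Implicit Arguments.
Unset Strict Implicit.

(* A category C together with a faithful functor z : C -> Set (Set = Type). *)
Record ConcCat := {
  Ob : Type;
  Hom : Ob -> Ob -> Type;
  comp : forall X Y Z : Ob, Hom Y Z -> Hom X Y -> Hom X Z;
  idm : forall X : Ob, Hom X X;
  comp_assoc : forall X Y Z W (h : Hom Z W) (g : Hom Y Z) (f : Hom X Y),
      comp h (comp g f) = comp (comp h g) f;
  comp_id_l : forall X Y (f : Hom X Y), comp (idm Y) f = f;
  comp_id_r : forall X Y (f : Hom X Y), comp f (idm X) = f;
  zO : Ob -> Type;
  zH : forall X Y : Ob, Hom X Y -> zO X -> zO Y;
  zH_id : forall X (x : zO X), zH (idm X) x = x;
  zH_comp : forall X Y Z (g : Hom Y Z) (f : Hom X Y) (x : zO X),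
      zH (comp g f) x = zH g (zH f x);
  zH_faithful : forall X Y (f g : Hom X Y), zH f = zH g -> f = g
}.
Arguments Hom : clear implicits.
Arguments comp {c X Y Z}.
Arguments idm {c}.
Arguments zO {c}.
Arguments zH {c X Y}.

Definition injective_map {A B : Type} (f : A -> B) := forall a a', f a = f a' -> a = a'.
Definition surjective_map {A B : Type} (f : A -> B) := forall b, exists a, f a = b.
Definition bijective_map {A B : Type} (f : A -> B) := injective_map f /\ surjective_map f.

Record FinLim (C : ConcCat) := {
  term : Ob C;
  bang : forall X, Hom C X term;
  bang_uniq : forall X (f : Hom C X term), f = bang X;
  prod : Ob C -> Ob C -> Ob C;
  pr1 : forall X Y, Hom C (prod X Y) X;
  pr2 : forall X Y, Hom C (prod X Y) Y;
  pair : forall Z X Y, Hom C Z X -> Hom C Z Y -> Hom C Z (prod X Y);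
  pr1_pair : forall Z X Y (f : Hom C Z X) (g : Hom C Z Y), comp (pr1 X Y) (pair f g) = f;
  pr2_pair : forall Z X Y (f : Hom C Z X) (g : Hom C Z Y), comp (pr2 X Y) (pair f g) = g;
  pair_uniq : forall Z X Y (h : Hom C Z (prod X Y)),
      h = pair (comp (pr1 X Y) h) (comp (pr2 X Y) h);
  eqz : forall X Y, Hom C X Y -> Hom C X Y -> Ob C;
  eqz_m : forall X Y (f g : Hom C X Y), Hom C (eqz f g) X;
  eqz_eq : forall X Y (f g : Hom C X Y), comp f (eqz_m f g) = comp g (eqz_m f g);
  eqz_univ : forall X Y (f g : Hom C X Y) Z (h : Hom C Z X),
      comp f h = comp g h -> exists! u : Hom C Z (eqz f g), comp (eqz_m f g) u = h
}.
Arguments term {C}.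
Arguments bang {C f0} X : rename.
Arguments prod {C f0} : rename.
Arguments pr1 {C f0 X Y} : rename.
Arguments pr2 {C f0 X Y} : rename.
Arguments pair {C f0 Z X Y} : rename.

(* ---------- Left adjoint F of z, given by universal arrows eta_S : S -> z(F S) ---------- *)
Record LeftAdj (C : ConcCat) := {
  Fo : Type -> Ob C;
  eta : forall S : Type, S -> zO (Fo S);
  lift : forall (S : Type) (Y : Ob C), (S -> zO Y) -> Hom C (Fo S) Y;
  lift_eq : forall S Y (f : S -> zO Y) (s : S), zH (lift f) (eta s) = f s;
  lift_uniq : forall S Y (f : S -> zO Y) (g : Hom C (Fo S) Y),
      (forall s, zH g (eta s) = f s) -> g = lift f
}.
Arguments Fo {C}.
Arguments eta {C l S}.
Arguments lift {C l S Y}.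

Definition Fh {C : ConcCat} (A : LeftAdj C) {S T : Type} (f : S -> T) : Hom C (Fo A S) (Fo A T) :=
  @lift C A S (Fo A T) (fun s => eta (f s)).

Definition F_fully_faithful {C : ConcCat} (A : LeftAdj C) : Prop :=
  forall S T : Type, bijective_map (@Fh C A S T).

(* A concrete category admitting discrete objects. *)
Record DCat := {
  dc :> ConcCat;
  lim : FinLim dc;
  adj : LeftAdj dc;
  adj_ff : F_fully_faithful adj
}.

Section DCatDefs.
Variable C : DCat.
Local Notation L := (lim C).
Local Notation A := (adj C).
Local Notation term := (@term C (lim C)).
Local Notation bang := (@bang C (lim C)).
Local Notation prod := (@prod C (lim C)).
Local Notation pr1 := (@pr1 C (lim C) _ _).
Local Notation pr2 := (@pr2 C (lim C) _ _).
Local Notation pair := (@pair C (lim C) _ _ _).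
Local Notation "g \oc f" := (comp g f) (at level 40, left associativity).

Definition discrete (X : Ob C) : Prop :=
  forall Y : Ob C, bijective_map (@zH C X Y).

Definition is_terminal (T : Ob C) : Prop := forall X : Ob C, exists! f : Hom C X T, True.
Definition is_product (P X Y : Ob C) (p1 : Hom C P X) (p2 : Hom C P Y) : Prop :=
  forall Z (f : Hom C Z X) (g : Hom C Z Y), exists! u : Hom C Z P, p1 \oc u = f /\ p2 \oc u = g.
Definition is_equalizer (E X Y : Ob C) (e : Hom C E X) (f g : Hom C X Y) : Prop :=
  f \oc e = g \oc e /\
  forall Z (h : Hom C Z X), f \oc h = g \oc h -> exists! u : Hom C Z E, e \oc u = h.

Definition F_preserves_finite_limits : Prop :=
  is_terminal (Fo A unit) /\
  (forall S T : Type, is_product (Fh A (@fst S T)) (Fh A (@snd S T))) /\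
  (forall (S T : Type) (f g : S -> T),
      is_equalizer (Fh A (@proj1_sig S (fun x => f x = g x))) (Fh A f) (Fh A g)).

(* The natural map Phi : Hom(D x X, Y) -> Hom_Set(zD, Hom(X,Y)),
   Phi(h)(d) = h o <c_d, id_X>, where c_d : X -> D is the (unique, as z is
   faithful) morphism with z(c_d) constantly d.  "Phi is bijective" is
   expressed as: every g has exactly one h with Phi(h) = g. *)
Definition Phi_rel (D X Y : Ob C) (h : Hom C (prod D X) Y) (g : zO D -> Hom C X Y) : Prop :=
  forall (d : zO D) (c : Hom C X D), (forall x, zH c x = d) -> h \oc pair c (idm X) = g d.

Definition topological : Prop :=
  F_preserves_finite_limits /\
  forall D X Y : Ob C, discrete D ->
    forall g : zO D -> Hom C X Y, exists! h : Hom C (prod D X) Y, Phi_rel h g.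

(* ---------- Topologised groups = group objects in C ---------- *)
Record GrpObj := {
  gob :> Ob C;
  gmul : Hom C (prod gob gob) gob;
  gone : Hom C term gob;
  ginv : Hom C gob gob;
  gassoc : gmul \oc pair (gmul \oc pr1) pr2
           = gmul \oc pair (pr1 \oc pr1) (gmul \oc pair (pr2 \oc pr1) pr2);
  gone_l : gmul \oc pair (gone \oc bang gob) (idm gob) = idm gob;
  gone_r : gmul \oc pair (idm gob) (gone \oc bang gob) = idm gob;
  ginv_l : gmul \oc pair ginv (idm gob) = gone \oc bang gob;
  ginv_r : gmul \oc pair (idm gob) ginv = gone \oc bang gob
}.

Definition is_gmor (G H : GrpObj) (f : Hom C G H) : Prop :=
  f \oc gmul G = gmul H \oc pair (f \oc pr1) (f \oc pr2).

Definition triv (G H : GrpObj) : Hom C G H := gone H \oc bang G.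

Definition is_cokernel (N G Q : GrpObj) (n : Hom C N G) (q : Hom C G Q) : Prop :=
  is_gmor q /\ q \oc n = triv N Q /\
  forall (H : GrpObj) (f : Hom C G H), is_gmor f -> f \oc n = triv N H ->
    exists! u : Hom C Q H, is_gmor u /\ u \oc q = f.

Definition is_kernel (N G Q : GrpObj) (q : Hom C G Q) (n : Hom C N G) : Prop :=
  is_gmor n /\ q \oc n = triv N Q /\
  forall (K : GrpObj) (f : Hom C K G), is_gmor f -> q \oc f = triv K Q ->
    exists! u : Hom C K N, is_gmor u /\ n \oc u = f.

(* n is an open normal subgroup, witnessed by the cokernel q : G -> G/N. *)
Definition open_normal_with (N G Q : GrpObj) (n : Hom C N G) (q : Hom C G Q) : Prop :=
  is_gmor n /\ is_cokernel n q /\ is_kernel q n /\ discrete Q.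

(* Elements of zY correspond to morphisms F(unit) -> Y. *)
Definition pt {Y : Ob C} (y : zO Y) : Hom C (Fo A unit) Y := lift (fun _ : unit => y).
Definition zpair {X Y : Ob C} (a : zO X) (b : zO Y) : zO (prod X Y) :=
  zH (pair (pt a) (pt b)) (eta tt).
Definition zterm : zO term := zH (bang (Fo A unit)) (eta tt).

Definition zmul (G : GrpObj) (a b : zO G) : zO G := zH (gmul G) (zpair a b).
Definition zone (G : GrpObj) : zO G := zH (gone G) zterm.
Definition zinv (G : GrpObj) (a : zO G) : zO G := zH (ginv G) a.

(* z(q) : zG -> zQ induces an isomorphism of groups zG / z(N) ~ zQ, where
   z(N) stands for the image of z(n) : zN -> zG:  z(q) is a group
   homomorphism, it is surjective, and its kernel is exactly the image of z(n). *)
Definition induces_quotient_iso (N G Q : GrpObj) (n : Hom C N G) (q : Hom C G Q) : Prop :=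
  (forall a b : zO G, zH q (zmul a b) = zmul (zH q a) (zH q b)) /\
  (forall y : zO Q, exists a : zO G, zH q a = y) /\
  (forall a : zO G, zH q a = zone Q <-> exists u : zO N, zH n u = a).

End DCatDefs.

(* Main.v *)
Require Import Defs.
From Stdlib Require Import ClassicalEpsilon FunctionalExtensionality.
Set Implicit Arguments.
Unset Strict Implicit.

Section Basics.
Variable C : DCat.
Local Notation term := (@term C (lim C)).
Local Notation bang := (@bang C (lim C)).
Local Notation prod := (@prod C (lim C)).
Local Notation pr1 := (@pr1 C (lim C) _ _).
Local Notation pr2 := (@pr2 C (lim C) _ _).
Local Notation pair := (@pair C (lim C) _ _ _).
Local Notation "g \oc f" := (comp g f) (at level 40, left associativity).

Lemma zH_pt (X : Ob C) (x : zO X) : zH (pt x) (eta tt) = x.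
Proof. unfold pt. apply lift_eq. Qed.

Lemma comp_pt (X Y : Ob C) (h : Hom C X Y) (x : zO X) : h \oc pt x = pt (zH h x).
Proof. unfold pt. apply lift_uniq. intros []. rewrite zH_comp. f_equal. apply zH_pt. Qed.

Lemma pt_ext (X : Ob C) (f g : Hom C (Fo (adj C) unit) X) :
  zH f (eta tt) = zH g (eta tt) -> f = g.
Proof.
  intro H. rewrite (lift_uniq (f:=fun _ => zH f (eta tt)) (g:=f)).
  symmetry. apply lift_uniq. intros []. auto. intros []. auto.
Qed.

Lemma zH_pair (Z X Y : Ob C) (f : Hom C Z X) (g : Hom C Z Y) x :
  zH (pair f g) x = zpair (zH f x) (zH g x).
Proof.
  unfold zpair. rewrite <- (zH_pt x) at 1. rewrite <- zH_comp. f_equal.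
  rewrite (pair_uniq (pair f g \oc pt x)).
  rewrite !comp_assoc, pr1_pair, pr2_pair, !comp_pt. reflexivity.
Qed.

Lemma zH_pr1 (X Y : Ob C) (a : zO X) (b : zO Y) : zH pr1 (zpair a b) = a.
Proof. unfold zpair. rewrite <- zH_comp, pr1_pair. apply zH_pt. Qed.
Lemma zH_pr2 (X Y : Ob C) (a : zO X) (b : zO Y) : zH pr2 (zpair a b) = b.
Proof. unfold zpair. rewrite <- zH_comp, pr2_pair. apply zH_pt. Qed.

Lemma zH_bang (X : Ob C) (x : zO X) : zH (bang X) x = zterm C.
Proof. rewrite <- (zH_pt x), <- zH_comp. unfold zterm. f_equal. apply bang_uniq. Qed.

Lemma term_pt (t : zO term) : t = zterm C.
Proof. rewrite <- (zH_bang t). rewrite <- (bang_uniq (idm term)). now rewrite zH_id. Qed.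

Lemma surj_pair (X Y : Ob C) (x : zO (prod X Y)) : x = zpair (zH pr1 x) (zH pr2 x).
Proof.
  rewrite <- zH_pair. rewrite <- (comp_id_r pr1), <- (comp_id_r pr2).
  rewrite <- pair_uniq. now rewrite zH_id.
Qed.

Lemma zH_triv (G H : GrpObj C) x : zH (triv G H) x = zone H.
Proof. unfold triv. rewrite zH_comp, zH_bang. reflexivity. Qed.


Ltac zsimpl := repeat (rewrite ?zH_comp, ?zH_pair, ?zH_pr1, ?zH_pr2, ?zH_id, ?zH_bang).
Ltac zsimplH H := repeat (rewrite ?zH_comp, ?zH_pair, ?zH_pr1, ?zH_pr2, ?zH_id, ?zH_bang in H).

Section GrpLaws.
Variable G : GrpObj C.
Lemma zmul_assoc (a b c : zO G) : zmul (zmul a b) c = zmul a (zmul b c).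
Proof.
  pose proof (f_equal (fun h => zH h (zpair (zpair a b) c)) (gassoc G)) as H.
  simpl in H. zsimplH H. exact H.
Qed.
Lemma zmul_1l (a : zO G) : zmul (zone G) a = a.
Proof.
  pose proof (f_equal (fun h => zH h a) (gone_l G)) as H. simpl in H. zsimplH H. exact H.
Qed.
Lemma zmul_1r (a : zO G) : zmul a (zone G) = a.
Proof.
  pose proof (f_equal (fun h => zH h a) (gone_r G)) as H. simpl in H. zsimplH H. exact H.
Qed.
Lemma zmul_Vl (a : zO G) : zmul (zinv a) a = zone G.
Proof.
  pose proof (f_equal (fun h => zH h a) (ginv_l G)) as H. simpl in H. zsimplH H. exact H.
Qed.
Lemma zmul_Vr (a : zO G) : zmul a (zinv a) = zone G.
Proof.
  pose proof (f_equal (fun h => zH h a) (ginv_r G)) as H. simpl in H. zsimplH H. exact H.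
Qed.
Lemma idem_one (x : zO G) : zmul x x = x -> x = zone G.
Proof.
  intro H. rewrite <- (zmul_1l x), <- (zmul_Vl x) at 1.
  rewrite zmul_assoc, H. apply zmul_Vl.
Qed.
Lemma inv_uniq (x y : zO G) : zmul y x = zone G -> y = zinv x.
Proof.
  intro H. rewrite <- (zmul_1r y), <- (zmul_Vr x), <- zmul_assoc, H. apply zmul_1l.
Qed.
End GrpLaws.

Lemma gmor_pt (G H : GrpObj C) (f : Hom C G H) :
  is_gmor f <-> forall a b, zH f (zmul a b) = zmul (zH f a) (zH f b).
Proof.
  split.
  - intros Hf a b. pose proof (f_equal (fun h => zH h (zpair a b)) Hf) as E.
    simpl in E. zsimplH E. exact E.
  - intros Hf. apply zH_faithful. apply functional_extensionality. intro x.
    rewrite (surj_pair x). zsimpl. apply Hf.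
Qed.

Lemma gmor_one (G H : GrpObj C) (f : Hom C G H) : is_gmor f -> zH f (zone G) = zone H.
Proof.
  intro Hf. apply idem_one. rewrite <- (proj1 (gmor_pt f) Hf). now rewrite zmul_1l.
Qed.
Lemma gmor_inv (G H : GrpObj C) (f : Hom C G H) a : is_gmor f -> zH f (zinv a) = zinv (zH f a).
Proof.
  intro Hf. apply inv_uniq. rewrite <- (proj1 (gmor_pt f) Hf), zmul_Vl. now apply gmor_one.
Qed.
Lemma gmor_comp (G H K : GrpObj C) (f : Hom C G H) (g : Hom C H K) :
  is_gmor f -> is_gmor g -> is_gmor (g \oc f).
Proof.
  intros Hf Hg. apply gmor_pt. intros a b. rewrite !zH_comp.
  rewrite (proj1 (gmor_pt f) Hf). apply (proj1 (gmor_pt g) Hg).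
Qed.
Lemma gmor_id (G : GrpObj C) : is_gmor (idm G).
Proof. apply gmor_pt. intros. now rewrite !zH_id. Qed.

Section Sub.
Variables (G : GrpObj C) (Y : Ob C) (f g : Hom C G Y).
Definition SP (x : zO G) := zH f x = zH g x.
Hypothesis P1 : SP (zone G).
Hypothesis Pm : forall a b, SP a -> SP b -> SP (zmul a b).
Hypothesis Pi : forall a, SP a -> SP (zinv a).

Definition E := @eqz C (lim C) _ _ f g.
Definition e : Hom C E G := @eqz_m C (lim C) _ _ f g.

Lemma e_P x : SP (zH e x).
Proof. unfold SP. rewrite <- !zH_comp. f_equal. apply eqz_eq. Qed.

Lemma e_mono (X : Ob C) (u1 u2 : Hom C X E) : e \oc u1 = e \oc u2 -> u1 = u2.
Proof.
  intro H.
  assert (Hh : f \oc (e \oc u1) = g \oc (e \oc u1)).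
  { rewrite !comp_assoc. f_equal. apply eqz_eq. }
  destruct (eqz_univ (lim C) Hh) as [u [_ Hu]].
  transitivity u; [symmetry|]; apply Hu; auto.
Qed.

Lemma e_inj a b : zH e a = zH e b -> a = b.
Proof.
  intro H. rewrite <- (zH_pt a), <- (zH_pt b). f_equal. apply e_mono.
  now rewrite !comp_pt, H.
Qed.

Lemma e_surj y : SP y -> exists a, zH e a = y.
Proof.
  intro H.
  assert (Hh : f \oc pt y = g \oc pt y) by (rewrite !comp_pt; now rewrite H).
  destruct (eqz_univ (lim C) Hh) as [u [Hu _]].
  exists (zH u (eta tt)). rewrite <- zH_comp. change (zH (e \oc u) (eta tt) = y).
  transitivity (zH (pt y) (eta tt)); [f_equal; exact Hu | apply zH_pt].
Qed.

Lemma factor (X : Ob C) (k : Hom C X G) : (forall x, SP (zH k x)) -> exists k', e \oc k' = k.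
Proof.
  intro H.
  assert (Hh : f \oc k = g \oc k).
  { apply zH_faithful. apply functional_extensionality. intro x. rewrite !zH_comp. apply H. }
  destruct (eqz_univ (lim C) Hh) as [u [Hu _]]. exists u. exact Hu.
Qed.

Definition factor_sig X k H : {k' : Hom C X E | e \oc k' = k} :=
  constructive_indefinite_description _ (@factor X k H).

Definition kmul : Hom C (prod E E) G := gmul G \oc pair (e \oc pr1) (e \oc pr2).
Lemma kmul_P x : SP (zH kmul x).
Proof. unfold kmul. zsimpl. apply Pm; apply e_P. Qed.
Definition mulE := proj1_sig (factor_sig kmul_P).
Lemma mulE_spec : e \oc mulE = kmul.
Proof. exact (proj2_sig (factor_sig kmul_P)). Qed.

Lemma kone_P x : SP (zH (gone G) x).
Proof. rewrite (term_pt x). exact P1. Qed.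
Definition oneE := proj1_sig (factor_sig kone_P).
Lemma oneE_spec : e \oc oneE = gone G.
Proof. exact (proj2_sig (factor_sig kone_P)). Qed.

Lemma kinv_P x : SP (zH (ginv G \oc e) x).
Proof. rewrite zH_comp. apply Pi, e_P. Qed.
Definition invE := proj1_sig (factor_sig kinv_P).
Lemma invE_spec : e \oc invE = ginv G \oc e.
Proof. exact (proj2_sig (factor_sig kinv_P)). Qed.

Lemma ze_mul x : zH e (zH mulE x) = zmul (zH e (zH pr1 x)) (zH e (zH pr2 x)).
Proof. rewrite <- zH_comp, mulE_spec. unfold kmul. zsimpl. reflexivity. Qed.
Lemma ze_one t : zH e (zH oneE t) = zone G.
Proof. rewrite <- zH_comp, oneE_spec. rewrite (term_pt t). reflexivity. Qed.
Lemma ze_inv a : zH e (zH invE a) = zinv (zH e a).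
Proof. rewrite <- zH_comp, invE_spec. rewrite zH_comp. reflexivity. Qed.

Ltac eqE := apply zH_faithful; apply functional_extensionality; intro x; apply e_inj;
  repeat (zsimpl; rewrite ?ze_mul, ?ze_one, ?ze_inv).

Lemma E_assoc : mulE \oc pair (mulE \oc pr1) pr2
           = mulE \oc pair (pr1 \oc pr1) (mulE \oc pair (pr2 \oc pr1) pr2).
Proof. eqE. apply zmul_assoc. Qed.
Lemma E_1l : mulE \oc pair (oneE \oc bang E) (idm E) = idm E.
Proof. eqE. apply zmul_1l. Qed.
Lemma E_1r : mulE \oc pair (idm E) (oneE \oc bang E) = idm E.
Proof. eqE. apply zmul_1r. Qed.
Lemma E_Vl : mulE \oc pair invE (idm E) = oneE \oc bang E.
Proof. eqE. apply zmul_Vl. Qed.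
Lemma E_Vr : mulE \oc pair (idm E) invE = oneE \oc bang E.
Proof. eqE. apply zmul_Vr. Qed.

Definition SubG : GrpObj C := Build_GrpObj E_assoc E_1l E_1r E_Vl E_Vr.

Lemma e_gmor : @is_gmor C SubG G e.
Proof. exact mulE_spec. Qed.

End Sub.
End Basics.
Local Notation "g \oc f" := (comp g f) (at level 40, left associativity).

Theorem proposition2p6 (C : DCat) (Htop : topological C)
  (G U Q : GrpObj C) (n : Hom C U G) (q : Hom C G Q)
  (Hopen : open_normal_with n q) :
  induces_quotient_iso n q.
Proof.
  destruct Hopen as [Hn [[Hq [Hqn Hcok]] [[_ [_ Hker]] Hdisc]]].
  assert (Hqm := proj1 (gmor_pt q) Hq).
  split; [exact Hqm|split].
  -
    set (I := fun y : zO Q => exists a, zH q a = y).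
    assert (I1 : I (zone Q)) by (exists (zone G); now apply gmor_one).
    set (rf := fun y : zO Q => if excluded_middle_informative (I y) then y else zone Q).
    destruct (proj2 (Hdisc Q) rf) as [r Hr].
    assert (HP : forall y, SP (idm Q) r y <-> I y).
    { intro y. unfold SP. rewrite zH_id, Hr. unfold rf.
      destruct (excluded_middle_informative (I y)) as [Hy|Hy]; split; auto.
      - intro E; rewrite E; exact I1.
      - intro; contradiction. }
    assert (P1 : SP (idm Q) r (zone Q)) by (apply HP; exact I1).
    assert (Pm : forall a b, SP (idm Q) r a -> SP (idm Q) r b -> SP (idm Q) r (zmul a b)).
    { intros a b Ha Hb. apply HP. apply HP in Ha, Hb.
      destruct Ha as [a' Ha], Hb as [b' Hb]. exists (zmul a' b'). now rewrite Hqm, Ha, Hb. }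
    assert (Pi : forall a, SP (idm Q) r a -> SP (idm Q) r (zinv a)).
    { intros a Ha. apply HP. apply HP in Ha. destruct Ha as [a' Ha].
      exists (zinv a'). rewrite gmor_inv by exact Hq. now rewrite Ha. }
    set (S := SubG P1 Pm Pi).
    assert (Hk : forall x, SP (idm Q) r (zH q x)) by (intro x; apply HP; now exists x).
    destruct (factor Hk) as [q' Hq'].
    assert (Hq'm : @is_gmor C G S q').
    { apply gmor_pt. intros a b. apply (@e_inj C Q Q (idm Q) r).
      change (zH (e (idm Q) r) (zH q' (zmul a b)) =
              zH (e (idm Q) r) (zH (@mulE _ _ _ _ _ Pm) (zpair (zH q' a) (zH q' b)))).
      rewrite ze_mul, zH_pr1, zH_pr2, <- !zH_comp, !Hq'. apply Hqm. }
    assert (Hq'n : q' \oc n = triv U S).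
    { apply zH_faithful; apply functional_extensionality; intro x.
      apply (@e_inj C Q Q (idm Q) r).
      transitivity (zone Q).
      + rewrite <- zH_comp, comp_assoc, Hq', Hqn. apply zH_triv.
      + unfold triv. rewrite zH_comp, zH_bang. symmetry. exact (ze_one P1 (zterm C)). }
    destruct (Hcok S q' Hq'm Hq'n) as [u [[Hum Huq] _]].
    destruct (Hcok Q q Hq Hqn) as [v [_ Hv]].
    assert (Heu : e (idm Q) r \oc u = idm Q).
    { transitivity v; [symmetry|]; apply Hv; split.
      - apply (@gmor_comp C Q S Q u (e (idm Q) r)); [exact Hum | exact (e_gmor P1 Pm Pi)].
      - rewrite <- comp_assoc. etransitivity; [exact (f_equal (fun h => e (idm Q) r \oc h) Huq) | exact Hq'].
      - apply gmor_id.
      - apply comp_id_l. }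
    intro y. assert (Hy : y = zH (e (idm Q) r) (zH u y)) by (rewrite <- (zH_id y) at 1; exact (eq_trans (f_equal (fun h => zH h y) (eq_sym Heu)) (zH_comp _ _ _))). apply HP. rewrite Hy. apply e_P.
  - intro a. split.
    + intro Ha.
      assert (P1 : SP q (triv G Q) (zone G)) by (unfold SP; rewrite zH_triv; now apply gmor_one).
      assert (Pm : forall a b, SP q (triv G Q) a -> SP q (triv G Q) b -> SP q (triv G Q) (zmul a b)).
      { unfold SP. intros x y Hx Hy. rewrite !zH_triv in *. rewrite Hqm, Hx, Hy. apply zmul_1l. }
      assert (Pi : forall a, SP q (triv G Q) a -> SP q (triv G Q) (zinv a)).
      { unfold SP. intros x Hx. rewrite !zH_triv in *. rewrite gmor_inv by exact Hq.
        rewrite Hx. symmetry. apply inv_uniq. apply zmul_1l. }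
      set (S := SubG P1 Pm Pi).
      assert (He : @is_gmor C S G (e q (triv G Q))) by exact (e_gmor P1 Pm Pi).
      assert (Hqe : q \oc e q (triv G Q) = triv S Q).
      { apply zH_faithful; apply functional_extensionality; intro x.
        rewrite zH_comp, (e_P x), zH_triv. unfold triv at 2. rewrite zH_comp, zH_bang. reflexivity. }
      destruct (Hker S _ He Hqe) as [u [[_ Hu] _]].
      destruct (@e_surj C G Q q (triv G Q) a) as [b Hb].
      { unfold SP. now rewrite zH_triv. }
      exists (zH u b). rewrite <- zH_comp. change (zH (n \oc u) b = a). now rewrite Hu.
    + intros [u Hu]. rewrite <- Hu, <- zH_comp, Hqn. apply zH_triv.
Qed.
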